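(* Let $G$ be a finite group, $S$ a subset of $G$, and $\sigma_1,\dots,\sigma_k$ pairwise commuting automorphisms of $G$ of order at most $2$. Assume the Cayley graph $C(G,S)$ is undirected and so is the twisted Cayley graph $C(G,S)^{\sigma_i}$ for every $1\le i\le k$. Suppose the spectrum of $C(G,S)$ contains no sub-multiset of size $\dim L^2(G)-\dim L^2(G)^{\sigma_1=1,\dots,\sigma_k=1}$ which is symmetric about the origin. Then $C(G,S)$ is non-isospectral to at least one of the twisted Cayley graphs $C(G,S)^{\prod_{i\in I}\sigma_i}$, where $I$ runs over the nonempty subsets of $\{1,\dots,k\}$. In particular, $C(G,S)$ is non-isomorphic to one of these twisted Cayley graphs.
   Context: $C(G,S)$ has vertex set $G$ and an edge from $x$ to $xs$ for each $s\in S$; for an automorphism $\tau$ of $G$, the twisted Cayley graph $C(G,S)^\tau$ has vertex set $G$ and an edge from $x$ to $\tau(xs)$ for each $s\in S$. A graph is undirected if its adjacency matrix is symmetric; its spectrum is the multiset of eigenvalues of its adjacency matrix, and two graphs on the same number of vertices are isospectral if their spectra coincide. $L^2(G)$ is the space of complex-valued functions on $G$, and $L^2(G)^{\sigma_1=1,\dots,\sigma_k=1}$ is the subspace of $f$ with $f\circ\sigma_i=f$ for all $i$. A multiset $M$ of complex numbers is symmetric about the origin if $M=-M$. *)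

(* Defs.v *)
From mathcomp Require Import all_boot all_order all_algebra all_fingroup all_field.
Set Implicit Arguments. Unset Strict Implicit. Unset Printing Implicit Defensive.
Import GRing.Theory Num.Theory.
Local Open Scope ring_scope.

(* Graphs on the vertex set of a finite type T are given by an edge-count
   function E x y = number of edges from x to y; their adjacency matrix is
   indexed by 'I_#|T| through enum_val. *)
Definition adjmx (T : finType) (E : T -> T -> nat) : 'M[algC]_#|T| :=
  \matrix_(i, j) (E (enum_val i) (enum_val j))%:R.

Definition twisted_edges (gT : finGroupType) (S : {set gT}) (tau : gT -> gT)
  (x y : gT) : nat := #|[set s in S | y == tau (x * s)%g]|.

Definition cayley_edges (gT : finGroupType) (S : {set gT}) (x y : gT) : nat :=
  #|[set s in S | y == (x * s)%g]|.

Definition cayley_adj (gT : finGroupType) (S : {set gT}) :=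
  adjmx (cayley_edges S).
Definition twisted_adj (gT : finGroupType) (S : {set gT}) (tau : gT -> gT) :=
  adjmx (twisted_edges S tau).

Definition undirected n (A : 'M[algC]_n) : Prop := A^T = A.

(* spectrum: multiset (seq up to permutation) of the roots of the
   characteristic polynomial, i.e. eigenvalues with algebraic multiplicity *)
Definition spectrum n (A : 'M[algC]_n) : seq algC :=
  sval (closed_field_poly_normal (char_poly A)).

Definition isospectral n (A B : 'M[algC]_n) : Prop :=
  perm_eq (spectrum A) (spectrum B).

Definition submultiset (s t : seq algC) : Prop :=
  forall a, (count_mem a t <= count_mem a s)%N.

Definition symmetric_about_origin (t : seq algC) : Prop :=
  perm_eq t (map -%R t).

Definition is_group_aut (gT : finGroupType) (f : gT -> gT) : Prop :=
  bijective f /\ {morph f : x y / (x * y)%g}.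

Definition graph_iso (T : finType) (E1 E2 : T -> T -> nat) : Prop :=
  exists phi : T -> T, bijective phi /\ forall x y, E2 (phi x) (phi y) = E1 x y.

Definition L2 (gT : finGroupType) := {ffun gT -> algC^o}.

Definition precomp_minus (gT : finGroupType) (sg : gT -> gT) (f : L2 gT) : L2 gT :=
  [ffun x => f (sg x)] - f.

Definition L2_fixed (gT : finGroupType) k (sigma : 'I_k -> gT -> gT)
  : {vspace L2 gT} :=
  (\bigcap_(i < k) lker (linfun (precomp_minus (sigma i))))%VS.

Definition aut_prod (gT : finGroupType) k (sigma : 'I_k -> gT -> gT)
  (I : {set 'I_k}) : gT -> gT :=
  foldr (fun i f => sigma i \o f) id (enum I).

(* Main.v *)
From HB Require Import structures.
Require Import Defs.
From mathcomp Require Import all_boot all_order all_algebra all_fingroup all_field.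
Set Implicit Arguments. Unset Strict Implicit. Unset Printing Implicit Defensive.
Import GRing.Theory Num.Theory.
Local Open Scope ring_scope.


Lemma char_poly_simil n (Q M N : 'M[algC]_n) :
  Q \in unitmx -> Q *m M = N *m Q -> char_poly M = char_poly N.
Proof.
move=> Qu eQ.
have e2 : map_mx polyC Q *m char_poly_mx M = char_poly_mx N *m map_mx polyC Q.
  rewrite /char_poly_mx mulmxBr mulmxBl -!map_mxM eQ.
  by rewrite mul_mx_scalar mul_scalar_mx.
have := congr1 determinant e2; rewrite !det_mulmx det_map_mx /= mulrC => H.
apply: (mulIf _ H); rewrite polyC_eq0 -unitfE -unitmxE //.
Qed.

Lemma spectrum_diag n (Q M : 'M[algC]_n) d : Q \in unitmx ->
  Q *m M = diag_mx d *m Q -> perm_eq (spectrum M) [seq d 0 j | j <- enum 'I_n].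
Proof.
move=> Qu eQ; rewrite /spectrum; case: closed_field_poly_normal => r /= Hr.
move: Hr; rewrite (monicP (char_poly_monic M)) scale1r (char_poly_simil Qu eQ).
rewrite char_poly_trig ?diag_mx_is_trig // => H; apply: prod_XsubC_eq.
rewrite -H big_map big_enum /=; apply: eq_bigr => j _.
by rewrite mxE eqxx mulr1n.
Qed.

Lemma diag_symreal n (M : 'M[algC]_n) : M^T = M -> map_mx Num.conj M = M ->
  diagonalizable M.
Proof.
move=> Ms Mr.
have Mn : M \is normalmx by apply/normalmxP; rewrite Ms Mr.
move/orthomx_spectralP: Mn => E.
exists (spectralmx M); first exact: spectral_unit.
apply/(similar_diagLR (spectral_unit M)); exists (spectral_diag M).
by rewrite conjVmx ?spectral_unit.
Qed.
Definition Pm (T : finType) (f : T -> T) : 'M[algC]_#|T| :=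
  \matrix_(i, j) ((enum_val j == f (enum_val i))%:R).

Lemma mulPm_l (T : finType) (f : T -> T) (M : 'M[algC]_#|T|) i j :
  (Pm f *m M) i j = M (enum_rank (f (enum_val i))) j.
Proof.
rewrite !mxE (bigD1 (enum_rank (f (enum_val i)))) //= mxE enum_rankK eqxx mul1r.
rewrite big1 ?addr0 // => l /negPf Hl; rewrite mxE.
case: eqP => [E|]; last by rewrite mul0r.
by move: Hl; rewrite -E enum_valK eqxx.
Qed.

Lemma mulPm_r (T : finType) (f finv : T -> T) m (M : 'M[algC]_(m, #|T|)) i j :
  cancel f finv -> cancel finv f ->
  (M *m Pm f) i j = M i (enum_rank (finv (enum_val j))).
Proof.
move=> fK Kf.
rewrite !mxE (bigD1 (enum_rank (finv (enum_val j)))) //= mxE enum_rankK Kf eqxx mulr1.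
rewrite big1 ?addr0 // => l /negPf Hl; rewrite mxE.
case: eqP => [E|]; last by rewrite mulr0.
by move: Hl; rewrite E fK enum_valK eqxx.
Qed.

Lemma Pm_comp (T : finType) (f g : T -> T) : Pm f *m Pm g = Pm (g \o f).
Proof.
apply/matrixP => i j; rewrite mulPm_l !mxE enum_rankK //.
Qed.

Lemma Pm_id (T : finType) : Pm (@id T) = 1%:M.
Proof.
apply/matrixP => i j; rewrite !mxE (inj_eq enum_val_inj) eq_sym //.
Qed.

Lemma Pm_ext (T : finType) (f g : T -> T) : f =1 g -> Pm f = Pm g.
Proof. by move=> fg; apply/matrixP => i j; rewrite !mxE fg. Qed.

Lemma Pm_unit (T : finType) (f : T -> T) : injective f -> Pm f \in unitmx.
Proof.
move=> /injF_bij [g fK Kf].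
have : Pm f *m Pm g = 1%:M by rewrite Pm_comp (Pm_ext (g:=id)) ?Pm_id.
move=> H; rewrite unitmxE; have := congr1 determinant H.
rewrite det_mulmx det1 => H2; apply/unitrPr; exists (\det (Pm g)); exact H2.
Qed.

Lemma adj_sym (T : finType) (E : T -> T -> nat) :
  undirected (adjmx E) -> forall x y, E x y = E y x.
Proof.
move=> H x y; have := congr1 (fun M : 'M_#|T| => M (enum_rank y) (enum_rank x)) H.
by rewrite !mxE !enum_rankK => /eqP; rewrite eqr_nat => /eqP.
Qed.

Lemma adj_conj (T : finType) (E : T -> T -> nat) :
  map_mx Num.conj (adjmx E) = adjmx E.
Proof. by apply/matrixP => i j; rewrite !mxE conjC_nat. Qed.

Lemma Pm_conj (T : finType) (f : T -> T) : map_mx Num.conj (Pm f) = Pm f.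
Proof. by apply/matrixP => i j; rewrite !mxE conjC_nat. Qed.

Lemma Pm_tr (T : finType) (f : T -> T) : involutive f -> (Pm f)^T = Pm f.
Proof.
move=> fK; apply/matrixP => i j; rewrite !mxE.
by rewrite eq_sym (can2_eq fK fK).
Qed.

Lemma card_set1P (T : finType) (S : {set T}) (P : pred T) a :
  (forall s, P s = (s == a)) -> #|[set s in S | P s]| = (a \in S).
Proof.
move=> HP; case: (boolP (a \in S)) => Ha.
  rewrite (_ : [set s in S | P s] = [set a]) ?cards1 //.
  by apply/setP => s; rewrite !inE HP; case: eqP => [->|]; rewrite ?Ha ?andbF.
rewrite (_ : [set s in S | P s] = set0) ?cards0 //.
by apply/setP => s; rewrite !inE HP; case: eqP => [->|]; rewrite ?(negPf Ha) ?andbF.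
Qed.

Lemma twisted_mul (gT : finGroupType) (S : {set gT}) (t tinv : gT -> gT) :
  cancel t tinv -> cancel tinv t ->
  twisted_adj S t = cayley_adj S *m Pm t.
Proof.
move=> tK Kt; apply/matrixP => i j; rewrite (mulPm_r _ _ _ tK Kt) !mxE enum_rankK.
congr (_%:R); apply: eq_card => s; rewrite !inE; congr andb.
by apply/eqP/eqP => [->|<-]; rewrite ?tK ?Kt.
Qed.

Lemma aut1 (gT : finGroupType) (f : gT -> gT) : is_group_aut f -> f 1%g = 1%g.
Proof.
move=> [_ fM]; have := fM 1%g 1%g; rewrite mulg1 => H.
by apply: (mulgI (f 1%g)); rewrite -H mulg1.
Qed.

Lemma S_inv (gT : finGroupType) (S : {set gT}) (f : gT -> gT) :
  is_group_aut f -> involutive f ->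
  undirected (cayley_adj S) -> undirected (twisted_adj S f) ->
  forall y, (f y \in S) = (y \in S).
Proof.
move=> fA fK HA HT y.
have e1 : cayley_edges S 1%g y = (y \in S).
  by apply: card_set1P => s; rewrite mul1g eq_sym.
have e2 : cayley_edges S y 1%g = ((y^-1)%g \in S).
  apply: card_set1P => s; apply/eqP/eqP => [h|->]; last by rewrite mulgV.
  by rewrite -(mulKg y s) -h mulg1.
have e3 : twisted_edges S f 1%g y = (f y \in S).
  by apply: card_set1P => s; rewrite mul1g; apply/eqP/eqP => ->; rewrite fK.
have e4 : twisted_edges S f y 1%g = ((y^-1)%g \in S).
  apply: card_set1P => s; apply/eqP/eqP => [h|->]; last by rewrite mulgV aut1.
  have : (y * s)%g = 1%g by rewrite -(fK (y * s)%g) -h aut1.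
  by move=> h2; rewrite -(mulKg y s) h2 mulg1.
have := adj_sym HT 1%g y; rewrite e3 e4 -e2 -(adj_sym HA) e1.
by case: (f y \in S); case: (y \in S).
Qed.

Lemma comm_Pm (gT : finGroupType) (S : {set gT}) (f : gT -> gT) :
  is_group_aut f -> involutive f -> (forall y, (f y \in S) = (y \in S)) ->
  cayley_adj S *m Pm f = Pm f *m cayley_adj S.
Proof.
move=> [_ fM] fK HS; apply/matrixP => i j.
rewrite (mulPm_r _ _ _ fK fK) mulPm_l !mxE !enum_rankK.
congr (_%:R); set x := enum_val i; set y := enum_val j.
rewrite -[LHS](card_preimset _ (inv_inj fK)); apply: eq_card => s; rewrite !inE HS.
congr andb; rewrite -(inj_eq (inv_inj fK)) fK fM fK //.
Qed.

Lemma iso_charpoly (T : finType) (E1 E2 : T -> T -> nat) :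
  graph_iso E1 E2 -> char_poly (adjmx E2) = char_poly (adjmx E1).
Proof.
move=> [phi [[g phiK Kphi] HE]].
apply: (char_poly_simil (Q := Pm phi)); first exact/Pm_unit/(can_inj phiK).
apply/matrixP => i j; rewrite mulPm_l (mulPm_r _ _ _ phiK Kphi) !mxE !enum_rankK.
by rewrite -HE Kphi.
Qed.


Lemma count_natr (T : Type) (p : pred T) (s : seq T) :
  (count p s)%:R = \sum_(x <- s) ((p x)%:R : algC).
Proof.
elim: s => [|x s IH] /=; first by rewrite big_nil.
by rewrite big_cons natrD IH.
Qed.

Lemma count_sym n k (a : 'I_n -> algC) (e : 'I_k -> 'I_n -> algC) :
  (forall i j, e i j = 1 \/ e i j = -1) ->
  (forall I : {set 'I_k}, perm_eq [seq a j | j <- enum 'I_n]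
        [seq a j * \prod_(i <- enum I) e i j | j <- enum 'I_n]) ->
  symmetric_about_origin [seq a j | j <- enum 'I_n & [exists i, e i j != 1]].
Proof.
move=> He Hp.
set J := fun j => [exists i, e i j != 1].
pose chi (I : {set 'I_k}) j := \prod_(i <- enum I) e i j.
have chi_pm I j : chi I j = 1 \/ chi I j = -1.
  rewrite /chi; apply: (big_ind (fun x => x = 1 \/ x = -1)); [by left| |].
    by move=> x y [->|->] [->|->]; rewrite ?mul1r ?mulr1 ?mulN1r ?opprK; auto.
  by move=> i _; exact: He.
pose c b j : algC := (a j == - b)%:R - (a j == b)%:R.
have key I b : \sum_(j <- enum 'I_n) (1 - chi I j) * c b j = 0.
  have H0 := Hp I; move/seq.permP: H0 => /(_ (pred1 b)) H0.
  have H : \sum_(j <- enum 'I_n) ((a j == b)%:R : algC) =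
           \sum_(j <- enum 'I_n) (a j * chi I j == b)%:R.
    by have := congr1 (fun m => (m%:R : algC)) H0; rewrite !count_natr !big_map.
  have : \sum_(j <- enum 'I_n) (1 - chi I j) * c b j =
      (1 + 1) * \sum_(j <- enum 'I_n) ((a j * chi I j == b)%:R - (a j == b)%:R).
    rewrite big_distrr /=; apply: eq_bigr => j _; rewrite /c.
    case: (chi_pm I j) => ->; first by rewrite subrr mul0r mulr1 subrr mulr0.
    by rewrite mulrN1 eqr_oppLR opprK.
  by move=> ->; rewrite sumrB -H subrr mulr0.
have K0 : \prod_(i : 'I_k) (1 + 1 : algC) != 0.
  by rewrite prodf_seq_neq0; apply/allP => i _ /=; rewrite -mulr2n pnatr_eq0.
have tot b : \sum_(j <- enum 'I_n) (J j)%:R * c b j = 0.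
  have : \sum_(I : {set 'I_k}) \sum_(j <- enum 'I_n) (1 - chi I j) * c b j = 0.
    by apply: big1 => I _; exact: key.
  rewrite exchange_big /=.
  have E j : \sum_(I : {set 'I_k}) (1 - chi I j) * c b j =
             (\prod_(i : 'I_k) (1 + 1 : algC)) * ((J j)%:R * c b j).
    rewrite -mulr_suml sumrB.
    have E1 : \sum_(I : {set 'I_k}) chi I j = \prod_(i : 'I_k) (e i j + 1).
      rewrite bigA_distr; apply: eq_bigr => I _.
      by rewrite /chi big_enum big_mkcond.
    have E2 : \sum_(I : {set 'I_k}) (1 : algC) = \prod_(i : 'I_k) (1 + 1).
      rewrite bigA_distr; apply: eq_bigr => I _.
      by rewrite big1 // => i _; case: (i \in I).
    rewrite E1 E2 mulrA; congr (_ * _).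
    rewrite /J; case: existsP => [[i0 Hi0]|Hn].
      have Hm : e i0 j = -1 by case: (He i0 j) Hi0 => ->; rewrite ?eqxx.
      by rewrite [X in _ - X](bigD1 i0) //= Hm addNr mul0r subr0 mulr1.
    rewrite [X in _ - X](eq_bigr (fun _ => 1 + 1)) ?subrr ?mulr0 // => i _.
    case: (He i j) => Hm; first by rewrite Hm.
    exfalso; apply: Hn; exists i; rewrite Hm; apply/eqP => h.
    have : (1 + 1 : algC) == 0 by rewrite -{1}h addNr.
    by rewrite -mulr2n pnatr_eq0.
  under eq_bigr do rewrite E.
  by rewrite -big_distrr /= => /eqP; rewrite mulf_eq0 (negPf K0) /= => /eqP.
rewrite /symmetric_about_origin; apply/allP => x _; apply/eqP.
rewrite count_map !count_map !count_filter.
apply/eqP; rewrite -(eqr_nat algC) !count_natr; apply/eqP.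
have H : \sum_(j <- enum 'I_n) (J j)%:R * ((a j == - x)%:R : algC) =
         \sum_(j <- enum 'I_n) (J j)%:R * ((a j == x)%:R : algC).
  move: (tot x); rewrite /c.
  under eq_bigr do rewrite mulrBr.
  by rewrite sumrB => /eqP; rewrite subr_eq0 => /eqP.
transitivity (\sum_(j <- enum 'I_n) (J j)%:R * ((a j == x)%:R : algC)).
  rewrite -enumT; apply: eq_bigr => j _ /=; rewrite inE andbT.
  by case: (J j); case: (a j == x); rewrite ?mul1r ?mul0r.
rewrite -enumT -H; apply: eq_bigr => j _ /=; rewrite inE andbT eqr_oppLR.
by case: (J j); case: (a j == - x); rewrite ?mul1r ?mul0r.
Qed.

Section PM.
Variables (gT : finGroupType) (sg : gT -> gT).
Lemma precomp_minus_lin : linear (precomp_minus sg).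
Proof.
move=> a u v; apply/ffunP => x; rewrite !ffunE.
by rewrite scalerBr opprD addrACA. Qed.
HB.instance Definition _ := GRing.isLinear.Build algC (L2 gT) (L2 gT) _ (precomp_minus sg) precomp_minus_lin.
End PM.

Lemma pm_E (gT : finGroupType) (sg : gT -> gT) f : linfun (precomp_minus sg) f = precomp_minus sg f.
Proof. by rewrite lfunE. Qed.

Lemma dimL2 (gT : finGroupType) : \dim (fullv : {vspace L2 gT}) = #|gT|.
Proof. rewrite dimvf. Fail by []. Fail by rewrite /= muln1. by rewrite /dim /= muln1. Qed.



Lemma diag_form n (Q M : 'M[algC]_n) : Q \in unitmx -> similar_diag Q M ->
  Q *m M = diag_mx (\row_j (conjmx Q M) j j) *m Q.
Proof.
move=> Qu /diag_mxP [d Hd].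
have -> : \row_j (conjmx Q M) j j = d by apply/rowP => j; rewrite mxE Hd mxE eqxx mulr1n.
by rewrite -Hd conjumx // mulmxKV.
Qed.

Lemma prod_form (gT : finGroupType) k (sigma : 'I_k -> gT -> gT)
  (Q : 'M[algC]_#|gT|) (e : 'I_k -> 'rV[algC]_#|gT|) :
  (forall i, Q *m Pm (sigma i) = diag_mx (e i) *m Q) ->
  forall s : seq 'I_k,
  Q *m Pm (foldr (fun i f => sigma i \o f) id s) =
  diag_mx (\row_j \prod_(i <- s) e i 0 j) *m Q.
Proof.
move=> hP; elim => [|i s IH] /=.
  rewrite Pm_id mulmx1 (_ : \row_j _ = const_mx 1).
    by rewrite diag_const_mx mul1mx.
  by apply/rowP => j; rewrite !mxE big_nil.
rewrite -Pm_comp mulmxA IH -mulmxA hP mulmxA mulmx_diag; congr (diag_mx _ *m _).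
by apply/rowP => j; rewrite !mxE big_cons mulrC.
Qed.

Lemma dim_fixed (gT : finGroupType) k (sigma : 'I_k -> gT -> gT)
  (Hinv : forall i x, sigma i (sigma i x) = x)
  (Q : 'M[algC]_#|gT|) (e : 'I_k -> 'rV[algC]_#|gT|) :
  Q \in unitmx -> (forall i, Q *m Pm (sigma i) = diag_mx (e i) *m Q) ->
  \dim (L2_fixed sigma) =
  count [pred j | [forall i, e i 0 j == 1]] (enum 'I_#|gT|).
Proof.
move=> Qu hP.
pose b (j : 'I_#|gT|) : L2 gT := [ffun x => Q j (enum_rank x)].
have bs i j x : b j (sigma i x) = e i 0 j * b j x.
  have := congr1 (fun M : 'M_#|gT| => M j (enum_rank x)) (hP i).
  by rewrite (mulPm_r _ _ _ (Hinv i) (Hinv i)) mul_diag_mx !mxE !ffunE enum_rankK.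
have expand (f : L2 gT) :
    f = \sum_j ((\row_y f (enum_val y)) *m invmx Q) 0 j *: b j.
  apply/ffunP => x; rewrite sum_ffunE.
  transitivity (((\row_y f (enum_val y)) *m invmx Q *m Q) 0 (enum_rank x)).
    by rewrite mulmxKV // mxE enum_rankK.
  by rewrite mxE; apply: eq_bigr => j _; rewrite !ffunE.
pose P j := [forall i, e i 0 j == 1].
pose X := [seq b j | j <- enum 'I_#|gT| & P j].
have Fix_eq : L2_fixed sigma = <<X>>%VS.
  apply/eqP; rewrite eqEsubv; apply/andP; split.
    apply/subvP => f Hf.
    have fs i x : f (sigma i x) = f x.
      have : f \in lker (linfun (precomp_minus (sigma i))).
        by move: Hf; apply/subvP; apply: (bigcapv_inf i).
      rewrite memv_ker lfunE /= => /eqP /ffunP /(_ x).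
      by rewrite !ffunE => /eqP; rewrite subr_eq0 => /eqP.
    pose u : 'rV[algC]_#|gT| := \row_y f (enum_val y).
    pose c := u *m invmx Q.
    have cs i j : c 0 j * e i 0 j = c 0 j.
      have uP : u *m Pm (sigma i) = u.
        by apply/rowP => y; rewrite (mulPm_r _ _ _ (Hinv i) (Hinv i)) !mxE enum_rankK fs.
      have h1 : c *m diag_mx (e i) *m Q = c *m Q.
        by rewrite -mulmxA -hP mulmxA /c mulmxKV // uP.
      have : c *m diag_mx (e i) = c by rewrite -[LHS](mulmxK Qu) h1 mulmxK.
      by move/rowP/(_ j); rewrite mul_mx_diag !mxE.
    rewrite (expand f) -/u -/c (bigID P) /= [X in _ + X]big1 ?addr0.
      apply: memv_suml => j Pj; apply: memvZ; apply: memv_span.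
      by apply/mapP; exists j => //; rewrite mem_filter Pj mem_enum.
    move=> j /forallPn [i Hi].
    have : c 0 j * (e i 0 j - 1) = 0 by rewrite mulrBr mulr1 cs subrr.
    move/eqP; rewrite mulf_eq0 subr_eq0 (negPf Hi) orbF => /eqP ->.
    by rewrite scale0r.
  apply/span_subvP => v /mapP [j]; rewrite mem_filter => /andP [Pj _] ->.
  apply/subv_bigcapP => i _; rewrite -memvE memv_ker lfunE /=.
  apply/eqP/ffunP => x; have := bs i j x; rewrite !ffunE => ->.
  by move/forallP: Pj => /(_ i) /eqP ->; rewrite mul1r subrr.
pose W := [seq b j | j <- enum 'I_#|gT|].
have fW : free W.
  apply: (@basis_free _ _ fullv); rewrite basisEdim; apply/andP; split.
    apply/subvP => f _; rewrite (expand f); apply: memv_suml => j _.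
    by apply: memvZ; apply: memv_span; apply: map_f; rewrite mem_enum.
  by rewrite size_map size_enum_ord dimL2.
have fX : free X.
  have hp : perm_eq (filter P (enum 'I_#|gT|) ++ filter (predC P) (enum 'I_#|gT|))
                    (enum 'I_#|gT|).
    by apply/permPl; exact: perm_filterC.
  have := perm_map b hp; rewrite map_cat => /perm_free; rewrite fW.
  exact: catl_free.
by rewrite Fix_eq (eqP fX) size_map size_filter.
Qed.



Unset Implicit Arguments.
Set Strict Implicit.

Theorem theorem4p7 (gT : finGroupType) (S : {set gT}) (k : nat)
  (sigma : 'I_k -> gT -> gT)
  (Haut : forall i, is_group_aut (sigma i))
  (Hinv : forall i x, sigma i (sigma i x) = x)
  (Hcomm : forall i j x, sigma i (sigma j x) = sigma j (sigma i x))
  (Hund : undirected (cayley_adj S))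
  (Hund_tw : forall i, undirected (twisted_adj S (sigma i)))
  (Hspec : ~ exists t : seq algC,
      [/\ size t = (\dim (fullv : {vspace L2 gT}) - \dim (L2_fixed sigma))%N,
          submultiset (spectrum (cayley_adj S)) t
        & symmetric_about_origin t]) :
  exists I : {set 'I_k}, I != set0 /\
    ~ isospectral (cayley_adj S) (twisted_adj S (aut_prod sigma I)) /\
    ~ graph_iso (cayley_edges S) (twisted_edges S (aut_prod sigma I)).
Proof.
set A := cayley_adj S.
have HSi i : forall y, (sigma i y \in S) = (y \in S).
  exact: S_inv (Haut i) (Hinv i) Hund (Hund_tw i).
have Acomm i : A *m Pm (sigma i) = Pm (sigma i) *m A.
  exact: comm_Pm (Haut i) (Hinv i) (HSi i).
pose fs := A :: [seq Pm (sigma i) | i <- enum 'I_k].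
have [Q Qu Hall] : codiagonalizable fs.
  apply/codiagonalizableP; split.
    move=> f g; rewrite !inE /comm_mx.
    move=> /predU1P [->|/mapP [i _ ->]] /predU1P [->|/mapP [j _ ->]] //.
    by rewrite !Pm_comp; apply: Pm_ext => x /=; rewrite Hcomm.
  move=> f; rewrite inE => /predU1P [->|/mapP [i _ ->]].
    by apply: diag_symreal; [exact: Hund | exact: adj_conj].
  by apply: diag_symreal; [exact: Pm_tr (Hinv i) | exact: Pm_conj].
pose a := \row_j (conjmx Q A) j j.
have hA : Q *m A = diag_mx a *m Q.
  by apply: diag_form => //; apply: (allP Hall); rewrite mem_head.
pose e i := \row_j (conjmx Q (Pm (sigma i))) j j.
have hP i : Q *m Pm (sigma i) = diag_mx (e i) *m Q.
  apply: diag_form => //; apply: (allP Hall).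
  by rewrite inE; apply/orP; right; apply: map_f; rewrite mem_enum.
have e_pm i j : e i 0 j = 1 \/ e i 0 j = -1.
  have h : Q *m (Pm (sigma i) *m Pm (sigma i)) = diag_mx (e i) *m diag_mx (e i) *m Q.
    by rewrite mulmxA hP -[LHS]mulmxA hP mulmxA.
  rewrite Pm_comp (@Pm_ext _ _ id) ?Pm_id ?mulmx1 ?mulmx_diag in h; last by move=> x; exact: Hinv.
  have := congr1 (fun M => (M *m invmx Q) j j) h; rewrite mulmxK // mulmxV // !mxE eqxx mulr1n.
  move/esym/eqP; rewrite -expr2 sqrf_eq1 => /orP [/eqP|/eqP]; auto.
have tau_inj (s : seq 'I_k) : injective (foldr (fun i f => sigma i \o f) id s).
  elim: s => [|i s IH] //=; apply: inj_comp => //; exact: inv_inj (Hinv i).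
have hI (I : {set 'I_k}) : perm_eq (spectrum (twisted_adj S (aut_prod sigma I)))
    [seq a 0 j * \prod_(i <- enum I) e i 0 j | j <- enum 'I_#|gT|].
  have [g tK Kt] := injF_bij (tau_inj (enum I)).
  rewrite /aut_prod (twisted_mul S tK Kt).
  have := spectrum_diag Qu (M := A *m Pm (foldr (fun i f => sigma i \o f) id (enum I)))
     (d := \row_j (a 0 j * \prod_(i <- enum I) e i 0 j)).
  rewrite (eq_map (g := fun j => a 0 j * \prod_(i <- enum I) e i 0 j)); last by move=> j; rewrite mxE.
  apply; rewrite mulmxA hA -mulmxA (prod_form hP) mulmxA mulmx_diag.
  by congr (diag_mx _ *m _); apply/rowP => j; rewrite !mxE.
have hA' : perm_eq (spectrum A) [seq a 0 j | j <- enum 'I_#|gT|].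
  by apply: spectrum_diag Qu hA.
case: (boolP [exists I : {set 'I_k}, (I != set0) &&
   ~~ perm_eq (spectrum A) (spectrum (twisted_adj S (aut_prod sigma I)))]).
  move/existsP => [I /andP [HI Hn]]; exists I; split => //; split.
    by apply/negP.
  move=> Hiso; apply: (negP Hn); have H := iso_charpoly Hiso.
  by rewrite /spectrum -/A H perm_refl.
move/existsPn => Hall'; exfalso; apply: Hspec.
pose J j := [exists i, e i 0 j != 1].
exists [seq a 0 j | j <- enum 'I_#|gT| & J j]; split.
- rewrite size_map size_filter dimL2 (dim_fixed Hinv Qu hP).
  rewrite -[X in (_ = X - _)%N](size_enum_ord #|gT|).
  rewrite -(count_predC [pred j | [forall i, e i 0 j == 1]]) addKn.
  by apply: eq_count => j /=; rewrite /J negb_forall.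
- move=> x; rewrite (seq.permP hA') count_map count_map count_filter.
  by apply: sub_count => j /andP [].
- apply: (count_sym (a := fun j => a 0 j) (e := fun i j => e i 0 j)).
    by move=> i j; exact: e_pm.
  move=> I; case: (eqVneq I set0) => [->|HI].
    rewrite enum_set0.
    have -> : [seq a 0 j * \prod_(i <- [::]) e i 0 j | j <- enum 'I_#|gT|] =
              [seq a 0 j | j <- enum 'I_#|gT|].
      by apply: eq_map => j; rewrite big_nil mulr1.
    exact: perm_refl.
  have := Hall' I; rewrite HI /= negbK => Hp.
  by apply: perm_trans (hI I); apply: perm_trans Hp; rewrite perm_sym.
Qed.
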